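(* Let $V\colon \mathrm{Alg}(\mathcal T,\mathcal E)\to\mathrm{Alg}(\mathcal T)$ be the inclusion. For every $\mathcal T$-algebra $\mathbb A=\langle A,\alpha\rangle$, the algebra $\langle A/\mathcal E,\alpha/\mathcal E\rangle$ satisfies $\mathcal E$. The assignment $H\langle A,\alpha\rangle=\langle A/\mathcal E,\alpha/\mathcal E\rangle$ extends to a functor $H\colon\mathrm{Alg}(\mathcal T)\to\mathrm{Alg}(\mathcal T,\mathcal E)$ that is left adjoint to $V$. The unit of this adjunction has components $s_{\mathbb A}$, and its counit is the identity at every $\mathbb A\in\mathrm{Alg}(\mathcal T,\mathcal E)$. In particular, $\mathrm{Alg}(\mathcal T,\mathcal E)$ is a full reflective subcategory of $\mathrm{Alg}(\mathcal T)$.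
   Context: Let $\mathcal C$ be a category and $\mathcal T=\langle T,\eta,\mu\rangle$ a monad on $\mathcal C$. - $\mathrm{Alg}(\mathcal T)$ is the category of Eilenberg–Moore $\mathcal T$-algebras $\langle A,\alpha\colon TA\to A\rangle$ and their homomorphisms. - $U\colon\mathrm{Alg}(\mathcal T)\to\mathcal C$ is the forgetful functor. - For a $\mathcal T$-algebra $\langle A,\alpha\rangle$ and an arrow $f\colon X\to A$, we write $f^\sharp=\alpha\circ Tf$. This is the unique homomorphism $\langle TX,\mu_X\rangle\to\langle A,\alpha\rangle$ with $f^\sharp\circ\eta_X=f$. $\mathcal T$-equations are a triple $\mathcal E=\langle E,l,r\rangle$, where $E$ is an endofunctor on $\mathcal C$ and $l,r\colon E\Rightarrow T$ are natural transformations. Standing assumptions: 1. $\mathrm{Alg}(\mathcal T)$ has coequalizers. 2. $U$ and $TU$ map regular epimorphisms of $\mathrm{Alg}(\mathcal T)$ to epimorphisms of $\mathcal C$. 3. $EU$ maps regular epimorphisms of $\mathrm{Alg}(\mathcal T)$ to epimorphisms of $\mathcal C$. For $\mathbb A=\langle A,\alpha\rangle\in\mathrm{Alg}(\mathcal T)$, let $l_A^\sharp=\mu_A\circ Tl_A$ and $r_A^\sharp=\mu_A\circ Tr_A$. These are homomorphisms $\langle TEA,\mu_{EA}\rangle\to\langle TA,\mu_A\rangle$. We write $s_{\mathbb A}\colon\langle A,\alpha\rangle\to\langle A/\mathcal E,\alpha/\mathcal E\rangle$ for a chosen coequalizer in $\mathrm{Alg}(\mathcal T)$ of the pair $\alpha\circ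 l_A^\sharp,\ \alpha\circ r_A^\sharp\colon\langle TEA,\mu_{EA}\rangle\to\langle A,\alpha\rangle$. A $\mathcal T$-algebra $\langle A,\alpha\rangle$ satisfies $\mathcal E$ if $\alpha\circ l_A=\alpha\circ r_A$. $\mathrm{Alg}(\mathcal T,\mathcal E)$ is the full subcategory of $\mathrm{Alg}(\mathcal T)$ on the algebras satisfying $\mathcal E$. Coequalizers are chosen so that $s_{\mathbb A}=\mathrm{id}$ whenever $\mathbb A$ satisfies $\mathcal E$. *)

(* Defs.v *)
From Stdlib Require Import ProofIrrelevance.

Set Implicit Arguments.
Unset Strict Implicit.

Record Category := {
  Ob :> Type;
  Hom : Ob -> Ob -> Type;
  idm : forall A, Hom A A;
  comp : forall A B C, Hom B C -> Hom A B -> Hom A C;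
  comp_id_l : forall A B (f : Hom A B), comp (idm B) f = f;
  comp_id_r : forall A B (f : Hom A B), comp f (idm A) = f;
  comp_assoc : forall A B C D (h : Hom C D) (g : Hom B C) (f : Hom A B),
      comp h (comp g f) = comp (comp h g) f
}.
Arguments Hom {c} _ _.
Arguments idm {c} _.
Arguments comp {c A B C} _ _.
Notation "g ∘ f" := (comp g f) (at level 40, left associativity).

Record Functor (C D : Category) := {
  fobj :> C -> D;
  fmap : forall A B, Hom A B -> Hom (fobj A) (fobj B);
  fmap_id : forall A, fmap (idm A) = idm (fobj A);
  fmap_comp : forall A B Cc (g : Hom B Cc) (f : Hom A B),
      fmap (g ∘ f) = fmap g ∘ fmap f
}.
Arguments fmap {C D} f {A B} _ : rename.

Definition epi (C : Category) (A B : C) (q : Hom A B) : Prop :=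
  forall Z (u v : Hom B Z), u ∘ q = v ∘ q -> u = v.

Definition is_coequalizer (C : Category) (P A Q : C) (f g : Hom P A)
  (q : Hom A Q) : Prop :=
  q ∘ f = q ∘ g /\
  forall Z (h : Hom A Z), h ∘ f = h ∘ g -> exists! u : Hom Q Z, u ∘ q = h.

Definition has_coequalizers (C : Category) : Prop :=
  forall (P A : C) (f g : Hom P A), exists (Q : C) (q : Hom A Q),
    is_coequalizer f g q.

Definition regular_epi (C : Category) (A Q : C) (q : Hom A Q) : Prop :=
  exists (P : C) (f g : Hom P A), is_coequalizer f g q.

Record Adjunction (C D : Category) (F : Functor C D) (G : Functor D C) := {
  adj_unit : forall A : C, Hom A (G (F A));
  adj_counit : forall B : D, Hom (F (G B)) B;
  adj_unit_nat : forall A A' (f : Hom A A'),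
      fmap G (fmap F f) ∘ adj_unit A = adj_unit A' ∘ f;
  adj_counit_nat : forall B B' (g : Hom B B'),
      g ∘ adj_counit B = adj_counit B' ∘ fmap F (fmap G g);
  adj_triangle_F : forall A : C,
      adj_counit (F A) ∘ fmap F (adj_unit A) = idm (F A);
  adj_triangle_G : forall B : D,
      fmap G (adj_counit B) ∘ adj_unit (G B) = idm (G B)
}.

Record Monad (C : Category) := {
  mT :> Functor C C;
  meta : forall X : C, Hom X (mT X);
  mmu : forall X : C, Hom (mT (mT X)) (mT X);
  meta_nat : forall X Y (f : Hom X Y), fmap mT f ∘ meta X = meta Y ∘ f;
  mmu_nat : forall X Y (f : Hom X Y),
      fmap mT f ∘ mmu X = mmu Y ∘ fmap mT (fmap mT f);
  mmu_eta_l : forall X, mmu X ∘ meta (mT X) = idm (mT X);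
  mmu_eta_r : forall X, mmu X ∘ fmap mT (meta X) = idm (mT X);
  mmu_assoc : forall X, mmu X ∘ fmap mT (mmu X) = mmu X ∘ mmu (mT X)
}.
Arguments meta {C} _ _.
Arguments mmu {C} _ _.

Section Algebras.
Variables (C : Category) (T : Monad C).

Record Alg := {
  acar : C;
  astr : Hom (T acar) acar;
  astr_unit : astr ∘ meta T acar = idm acar;
  astr_assoc : astr ∘ fmap T astr = astr ∘ mmu T acar
}.

Definition is_alg_hom (A B : Alg) (f : Hom (acar A) (acar B)) : Prop :=
  f ∘ astr A = astr B ∘ fmap T f.
Arguments is_alg_hom A B f : clear implicits.

Definition AlgHom (A B : Alg) := { f : Hom (acar A) (acar B) | is_alg_hom A B f }.

Lemma AlgHom_eq (A B : Alg) (f g : AlgHom A B) :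
  proj1_sig f = proj1_sig g -> f = g.
Proof.
  destruct f as [f pf], g as [g pg]; simpl; intros ->.
  f_equal; apply proof_irrelevance.
Qed.

Lemma alg_id_hom (A : Alg) : is_alg_hom A A (idm (acar A)).
Proof. unfold is_alg_hom. rewrite fmap_id, comp_id_l, comp_id_r. reflexivity. Qed.

Lemma alg_comp_hom (A B D : Alg) (g : AlgHom B D) (f : AlgHom A B) :
  is_alg_hom A D (proj1_sig g ∘ proj1_sig f).
Proof.
  destruct g as [g pg], f as [f pf]; unfold is_alg_hom in *; simpl.
  rewrite <- comp_assoc, pf, comp_assoc, pg, <- comp_assoc, <- fmap_comp.
  reflexivity.
Qed.

Definition alg_idm (A : Alg) : AlgHom A A := exist _ _ (alg_id_hom A).
Definition alg_comp (A B D : Alg) (g : AlgHom B D) (f : AlgHom A B) : AlgHom A D :=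
  exist _ _ (alg_comp_hom g f).

Definition AlgCat : Category.
Proof.
  refine {| Ob := Alg; Hom := AlgHom; idm := alg_idm; comp := alg_comp |}.
  - intros; apply AlgHom_eq; simpl; apply comp_id_l.
  - intros; apply AlgHom_eq; simpl; apply comp_id_r.
  - intros; apply AlgHom_eq; simpl; apply comp_assoc.
Defined.

Definition Ufun : Functor AlgCat C.
Proof.
  refine {| fobj := (fun A : AlgCat => acar A);
            fmap := (fun A B (f : Hom (c := AlgCat) A B) => proj1_sig f) |};
    reflexivity.
Defined.

Definition free_alg (X : C) : Alg.
Proof.
  refine {| acar := T X; astr := mmu T X |}.
  - apply mmu_eta_l.
  - apply mmu_assoc.
Defined.

Record Equations := {
  eqE : Functor C C;
  eql : forall X : C, Hom (eqE X) (T X);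
  eqr : forall X : C, Hom (eqE X) (T X);
  eql_nat : forall X Y (f : Hom X Y), fmap T f ∘ eql X = eql Y ∘ fmap eqE f;
  eqr_nat : forall X Y (f : Hom X Y), fmap T f ∘ eqr X = eqr Y ∘ fmap eqE f
}.

Variable Eq : Equations.

Definition satisfies (A : Alg) : Prop :=
  astr A ∘ eql Eq (acar A) = astr A ∘ eqr Eq (acar A).

(* alpha o k^sharp, where k^sharp = mu_A o T k, as a homomorphism
   <T E A, mu_{EA}> -> <A, alpha>, for k : EA -> TA natural *)
Lemma eq_pair_hom (A : Alg) (k : forall X : C, Hom (eqE Eq X) (T X))
  (knat : forall X Y (f : Hom X Y), fmap T f ∘ k X = k Y ∘ fmap (eqE Eq) f) :
  is_alg_hom (free_alg (eqE Eq (acar A))) A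
    (astr A ∘ (mmu T (acar A) ∘ fmap T (k (acar A)))).
Proof.
  unfold is_alg_hom; simpl.
  set (a := acar A).
  rewrite <- !comp_assoc.
  rewrite (mmu_nat T (k a)).
  rewrite (comp_assoc (mmu T a)), <- (mmu_assoc T a).
  rewrite !fmap_comp, !comp_assoc.
  unfold a; rewrite (astr_assoc A).
  reflexivity.
Qed.

Definition lhom (A : Alg) : AlgHom (free_alg (eqE Eq (acar A))) A :=
  exist _ _ (eq_pair_hom A (eql_nat Eq)).
Definition rhom (A : Alg) : AlgHom (free_alg (eqE Eq (acar A))) A :=
  exist _ _ (eq_pair_hom A (eqr_nat Eq)).

Definition AlgE_ob := { A : Alg | satisfies A }.

Definition AlgECat : Category.
Proof.
  refine {| Ob := AlgE_ob;
            Hom := (fun X Y : AlgE_ob => AlgHom (proj1_sig X) (proj1_sig Y));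
            idm := (fun X : AlgE_ob => alg_idm (proj1_sig X));
            comp := (fun X Y Z (g : AlgHom (proj1_sig Y) (proj1_sig Z))
                          (f : AlgHom (proj1_sig X) (proj1_sig Y)) => alg_comp g f) |}.
  - intros; apply AlgHom_eq; simpl; apply comp_id_l.
  - intros; apply AlgHom_eq; simpl; apply comp_id_r.
  - intros; apply AlgHom_eq; simpl; apply comp_assoc.
Defined.

Definition Vfun : Functor AlgECat AlgCat.
Proof.
  refine {| fobj := (fun X : AlgECat => (proj1_sig X : AlgCat));
            fmap := (fun X Y (f : Hom (c := AlgECat) X Y) => (f : Hom (c := AlgCat) _ _)) |};
    reflexivity.
Defined.

End Algebras.

Arguments Alg {C} T.
Arguments AlgCat {C} T.
Arguments Ufun {C} T.
Arguments Equations {C} T.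
Arguments satisfies {C T} Eq A.
Arguments lhom {C T} Eq A.
Arguments rhom {C T} Eq A.
Arguments AlgECat {C T} Eq.
Arguments Vfun {C T} Eq.

(* Main.v *)
Require Import Defs.
From Stdlib Require Import ProofIrrelevance ClassicalEpsilon.

Lemma key_sharp (C : Category) (T : Monad C) (Eq : Equations T) (A B : Alg T)
  (g : Hom (acar A) (acar B)) (pg : @is_alg_hom C T A B g)
  (k : forall X : C, Hom (eqE Eq X) (T X))
  (knat : forall X Y (f : Hom X Y), fmap T f ∘ k X = k Y ∘ fmap (eqE Eq) f) :
  g ∘ (astr A ∘ (mmu T (acar A) ∘ fmap T (k (acar A))))
  = astr B ∘ fmap T (astr B ∘ (k (acar B) ∘ fmap (eqE Eq) g)).
Proof.
  unfold is_alg_hom in pg.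
  rewrite <- knat.
  rewrite comp_assoc, pg, <- comp_assoc, (comp_assoc (fmap T g)), mmu_nat.
  rewrite <- comp_assoc, comp_assoc, <- astr_assoc.
  rewrite !fmap_comp, !comp_assoc. reflexivity.
Qed.

Lemma sat_coeq (C : Category) (T : Monad C) (Eq : Equations T) (A B : Alg T)
  (g : @Hom (AlgCat T) A B) : satisfies Eq B ->
  @comp (AlgCat T) _ _ _ g (lhom Eq A) = @comp (AlgCat T) _ _ _ g (rhom Eq A).
Proof.
  intros HB. apply AlgHom_eq. simpl.
  rewrite !(@key_sharp C T Eq A B _ (proj2_sig g) _ (eql_nat Eq)), !(@key_sharp C T Eq A B _ (proj2_sig g) _ (eqr_nat Eq)). unfold satisfies in HB.
  rewrite !comp_assoc, HB. reflexivity.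
Qed.

Lemma sharp_eta (C : Category) (T : Monad C) (X Y : C) (k : Hom X (T Y)) :
  (mmu T Y ∘ fmap T k) ∘ meta T X = k.
Proof.
  rewrite <- comp_assoc, meta_nat, comp_assoc, mmu_eta_l, comp_id_l. reflexivity.
Qed.

Lemma Q_sat (C : Category) (T : Monad C) (Eq : Equations T)
  (HEU : forall (A B : AlgCat T) (q : Hom A B), regular_epi q ->
          epi (fmap (eqE Eq) (fmap (Ufun T) q)))
  (Q : Alg T -> Alg T)
  (s : forall A : Alg T, Hom (c := AlgCat T) A (Q A))
  (Hs : forall A : Alg T,
     @is_coequalizer (AlgCat T) (free_alg T (eqE Eq (acar A))) A (Q A)
       (lhom Eq A) (rhom Eq A) (s A)) (A : Alg T) : satisfies Eq (Q A).
Proof.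
  assert (Hr : regular_epi (s A)) by (do 3 eexists; apply Hs).
  pose proof (HEU _ _ _ Hr) as He. simpl in He.
  unfold satisfies. apply He.
  destruct (s A) as [q pq] eqn:Eqs. simpl. unfold is_alg_hom in pq.
  rewrite <- !comp_assoc, <- eql_nat, <- eqr_nat, !comp_assoc, <- pq.
  destruct (Hs A) as [H1 _]. rewrite Eqs in H1.
  apply (f_equal (@proj1_sig _ _)) in H1. simpl in H1.
  apply (f_equal (fun h => h ∘ meta T (eqE Eq (acar A)))) in H1.
  rewrite <- !comp_assoc in H1. rewrite !(comp_assoc _ (fmap T _) (meta T _)), !sharp_eta in H1. rewrite <- !comp_assoc. exact H1.
Qed.

Lemma s_epi (C : Category) (T : Monad C) (Eq : Equations T)
  (Q : Alg T -> Alg T)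
  (s : forall A : Alg T, Hom (c := AlgCat T) A (Q A))
  (Hs : forall A : Alg T,
     @is_coequalizer (AlgCat T) (free_alg T (eqE Eq (acar A))) A (Q A)
       (lhom Eq A) (rhom Eq A) (s A)) (A : Alg T) (Z : AlgCat T)
  (u v : @Hom (AlgCat T) (Q A) Z) :
  @comp (AlgCat T) _ _ _ u (s A) = @comp (AlgCat T) _ _ _ v (s A) -> u = v.
Proof.
  intros E. destruct (Hs A) as [H1 H2].
  destruct (H2 Z (@comp (AlgCat T) _ _ _ u (s A))) as [w [_ Hw]].
  - rewrite <- !(comp_assoc (c:=AlgCat T)), H1. reflexivity.
  - rewrite <- (Hw u eq_refl). apply Hw. symmetry; exact E.
Qed.

Lemma ext_ex (C : Category) (T : Monad C) (Eq : Equations T)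
  (Q : Alg T -> Alg T)
  (s : forall A : Alg T, Hom (c := AlgCat T) A (Q A))
  (Hs : forall A : Alg T,
     @is_coequalizer (AlgCat T) (free_alg T (eqE Eq (acar A))) A (Q A)
       (lhom Eq A) (rhom Eq A) (s A)) (A B : Alg T) (HB : satisfies Eq B)
  (g : @Hom (AlgCat T) A B) :
  exists u : @Hom (AlgCat T) (Q A) B, @comp (AlgCat T) _ _ _ u (s A) = g.
Proof.
  destruct (Hs A) as [_ H2]. destruct (H2 B g (@sat_coeq C T Eq A B g HB)) as [w [Hw _]].
  eauto.
Qed.

Lemma counit_eq (C : Category) (T : Monad C) (Eq : Equations T)
  (B' : Alg T) (pB : satisfies Eq B') :
  forall p : { X : AlgCat T & @Hom (AlgCat T) B' X },
  existT (fun X : AlgCat T => @Hom (AlgCat T) B' X) B' (@idm (AlgCat T) B') = p ->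
  forall (pf : satisfies Eq (projT1 p)) (u : AlgHom (projT1 p) B'),
  @comp (AlgCat T) _ _ _ u (projT2 p) = @idm (AlgCat T) B' ->
  existT (fun X : AlgECat Eq => @Hom (AlgECat Eq) X (exist _ B' pB))
    (exist _ (projT1 p) pf) u
  = existT (fun X : AlgECat Eq => @Hom (AlgECat Eq) X (exist _ B' pB))
    (exist _ B' pB) (@idm (AlgECat Eq) (exist _ B' pB)).
Proof.
  intros p e. destruct e. simpl. intros pf u Hu.
  pose proof (comp_id_r (c := AlgCat T) u) as Hu2; simpl in Hu, Hu2; rewrite Hu2 in Hu; subst u.
  rewrite (proof_irrelevance _ pf pB). reflexivity.
Qed.
Theorem lemma2p4
  (C : Category) (T : Monad C) (Eq : Equations T)
  (* standing assumption 1: Alg(T) has coequalizers *)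
  (Hcoeq_all : has_coequalizers (AlgCat T))
  (* standing assumption 2: U and TU map regular epis of Alg(T) to epis of C *)
  (HU : forall (A B : AlgCat T) (q : Hom A B), regular_epi q ->
          epi (fmap (Ufun T) q) /\ epi (fmap T (fmap (Ufun T) q)))
  (* standing assumption 3: EU maps regular epis of Alg(T) to epis of C *)
  (HEU : forall (A B : AlgCat T) (q : Hom A B), regular_epi q ->
          epi (fmap (eqE Eq) (fmap (Ufun T) q)))
  (* chosen coequalizers s_A : <A,alpha> -> <A/E, alpha/E> of alpha o l_A^#, alpha o r_A^# *)
  (Q : Alg T -> Alg T)
  (s : forall A : Alg T, Hom (c := AlgCat T) A (Q A))
  (Hs : forall A : Alg T,
     @is_coequalizer (AlgCat T) (free_alg T (eqE Eq (acar A))) A (Q A)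
       (lhom Eq A) (rhom Eq A) (s A))
  (* chosen so that s_A = id whenever A satisfies E *)
  (Hs_id : forall A : Alg T, satisfies Eq A ->
     existT (fun X : AlgCat T => @Hom (AlgCat T) A X) (Q A) (s A)
     = existT (fun X : AlgCat T => @Hom (AlgCat T) A X) A (@idm (AlgCat T) A)) :
  (forall A : Alg T, satisfies Eq (Q A)) /\
  exists (H : Functor (AlgCat T) (AlgECat Eq))
         (adj : Adjunction H (Vfun Eq)),
    (forall A : AlgCat T, proj1_sig (H A) = Q A) /\
    (forall A : AlgCat T,
       existT (fun X : AlgCat T => @Hom (AlgCat T) A X) (Vfun Eq (H A)) (adj_unit adj A)
       = existT (fun X : AlgCat T => @Hom (AlgCat T) A X) (Q A) (s A)) /\
    (forall B : AlgECat Eq,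
       existT (fun X : AlgECat Eq => @Hom (AlgECat Eq) X B) (H (Vfun Eq B)) (adj_counit adj B)
       = existT (fun X : AlgECat Eq => @Hom (AlgECat Eq) X B) B (idm B)) /\
    (* V is full and faithful (Alg(T,E) is a full reflective subcategory) *)
    (forall (X Y : AlgECat Eq) (f : @Hom (AlgCat T) (Vfun Eq X) (Vfun Eq Y)),
       exists! g : @Hom (AlgECat Eq) X Y, fmap (Vfun Eq) g = f).
Proof.
  pose proof (@Q_sat C T Eq HEU Q s Hs) as QS.
  set (ext := fun (A B : Alg T) (HB : satisfies Eq B) (g : @Hom (AlgCat T) A B) =>
     proj1_sig (constructive_indefinite_description _ (@ext_ex C T Eq Q s Hs A B HB g))).
  assert (extP : forall A B HB g, @comp (AlgCat T) _ _ _ (ext A B HB g) (s A) = g).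
  { intros. exact (proj2_sig (constructive_indefinite_description _ (@ext_ex C T Eq Q s Hs A B HB g))). }
  clearbody ext.
  split; [exact QS|].
  pose (eps := fun B : AlgE_ob Eq => ext (proj1_sig B) (proj1_sig B) (proj2_sig B) (@idm (AlgCat T) (proj1_sig B))).
  assert (epsP : forall B, @comp (AlgCat T) _ _ _ (eps B) (s (proj1_sig B)) = @idm (AlgCat T) (proj1_sig B)).
  { intros B. apply extP. }
  clearbody eps.
  unshelve eexists (@Build_Functor (AlgCat T) (AlgECat Eq)
     (fun A => exist _ (Q A) (QS A))
     (fun A B f => ext A (Q B) (QS B) (@comp (AlgCat T) _ _ _ (s B) f)) _ _).
  - intros A. apply (@s_epi C T Eq Q s Hs). rewrite extP.
    exact (eq_trans (comp_id_r (c:=AlgCat T) (s A)) (eq_sym (comp_id_l (c:=AlgCat T) (s A)))).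
  - intros A B D g f. apply (@s_epi C T Eq Q s Hs).
    refine (eq_trans (extP _ _ _ _) _).
    refine (eq_trans _ (comp_assoc (c:=AlgCat T) _ _ _)).
    refine (eq_trans _ (f_equal (fun h => @comp (AlgCat T) _ _ _ _ h) (eq_sym (extP _ _ _ _)))).
    refine (eq_trans _ (eq_sym (comp_assoc (c:=AlgCat T) _ _ _))).
    rewrite extP. apply (comp_assoc (c:=AlgCat T)).
  - idtac.
  match goal with |- @ex (Adjunction ?F ?G) _ => unshelve refine (ex_intro _ (@Build_Adjunction _ _ F G s eps _ _ _ _) _) end.
  + intros A A' f. apply extP.
  + intros B B' g. apply (@s_epi C T Eq Q s Hs).
    change (@comp (AlgCat T) _ _ _ (@comp (AlgCat T) _ _ _ g (eps B)) (s (proj1_sig B))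
      = @comp (AlgCat T) _ _ _ (@comp (AlgCat T) _ _ _ (eps B')
           (ext (proj1_sig B) (Q (proj1_sig B')) (QS _) (@comp (AlgCat T) _ _ _ (s (proj1_sig B')) g))) (s (proj1_sig B))).
    rewrite <- !(comp_assoc (c:=AlgCat T)), epsP, extP, (comp_assoc (c:=AlgCat T)), epsP.
    rewrite (comp_id_l (c:=AlgCat T)), (comp_id_r (c:=AlgCat T)). reflexivity.
  + intros A. apply (@s_epi C T Eq Q s Hs).
    change (@comp (AlgCat T) _ _ _ (@comp (AlgCat T) _ _ _ (eps (exist _ (Q A) (QS A)))
           (ext A (Q (Q A)) (QS _) (@comp (AlgCat T) _ _ _ (s (Q A)) (s A)))) (s A)
      = @comp (AlgCat T) _ _ _ (@idm (AlgCat T) (Q A)) (s A)).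
    pose proof (epsP (exist _ (Q A) (QS A))) as E1. change (proj1_sig (exist (satisfies Eq) (Q A) (QS A))) with (Q A) in E1.
    rewrite <- !(comp_assoc (c:=AlgCat T)), extP, (comp_assoc (c:=AlgCat T)). exact (f_equal (fun h => @comp (AlgCat T) _ _ _ h (s A)) E1).
  + intros B. apply epsP.
  + split; [intros; reflexivity|]. split; [intros; reflexivity|]. split.
    * intros [B' pB].
      exact (@counit_eq C T Eq B' pB _ (eq_sym (Hs_id B' pB)) (QS B') (eps (exist _ B' pB)) (epsP (exist _ B' pB))).
    * intros X Y f. exists f. split; [reflexivity|]. intros g Hg. symmetry. exact Hg.
Qed.
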